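(* Let $p$ be a number of predicate symbols and let $M$ be a set of $m$ metarules, each in the fragment $\mathcal{M}^i_j$ and each containing, in addition to the (at most $j+1$) existentially quantified higher-order variables occurring in predicate positions of its literals, at most $k$ additional existentially quantified higher-order variables (occurring as arguments of literals). Then the number of (abstracted) programs expressible with $n$ clauses, where each clause is obtained from some metarule in $M$ by substituting each existentially quantified higher-order variable with one of the $p$ predicate symbols, is at most $(m\,p^{j+1+k})^n$.
   Context: A metarule is a higher-order formula of the form $\exists \pi \forall \mu\; l_0 \leftarrow l_1,\dots,l_r$, where each $l_t$ is a literal, $\pi$ and $\mu$ are disjoint sets of variables, each variable being first-order (can be bound to a constant symbol) or higher-order (can be bound to a predicate symbol). An example is $P(A,B) \leftarrow Q(A,B,R)$ with $P,Q,R$ existentially quantified higher-order variables and $A,B$ universally quantified first-order variables; here $R$ is an existentially quantified higher-order variable occurring as an argument. A metarule is in the fragment $\mathcal{M}^i_j$ if it has at most $j$ literals in the body and each literal has arity at most $i$. A clause is obtained from a metarule $M_0$ as $M_0\theta$, where $\theta$ is a substitution grounding all the existentially quantified variables of $M_0$ (here, mapping each existentially quantified higher-order variable to one of the $p$ available predicate symbols). A program with $n$ clauses is a selection of $n$ such clauses. *)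

(* Defs.v *)
From HB Require Import structures.
From mathcomp Require Import all_boot.
Set Implicit Arguments. Unset Strict Implicit. Unset Printing Implicit Defensive.

(* HV x : higher-order variable named x (can be bound to a predicate symbol)
   FV x : first-order variable named x
   PS q : predicate symbol q *)
Inductive term (P : Type) := HV of nat | FV of nat | PS of P.
Arguments HV {P}. Arguments FV {P}. Arguments PS {P}.

Section TermEq.
Variable P : eqType.
Definition term_code (t : term P) : (nat + nat) + P :=
  match t with HV x => inl (inl x) | FV x => inl (inr x) | PS q => inr q end.
Definition term_decode (c : (nat + nat) + P) : term P :=
  match c with inl (inl x) => HV x | inl (inr x) => FV x | inr q => PS q end.
Lemma term_codeK : cancel term_code term_decode. Proof. by case. Qed.
HB.instance Definition _ := Equality.copy (term P) (can_type term_codeK).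
End TermEq.

(* A literal: the term in predicate position, followed by its argument list. *)
Definition lit (P : Type) := (term P * seq (term P))%type.
Definition arity (P : Type) (l : lit P) : nat := size l.2.

(* A metarule  exists pi forall mu, head <- body.  [mex] lists the names of the
   existentially quantified higher-order variables (pi); every other variable
   is universally quantified (mu). *)
Record metarule (p : nat) := Metarule {
  mhead : lit 'I_p;
  mbody : seq (lit 'I_p);
  mex : seq nat }.

Section MREq.
Variable p : nat.
Definition mr_code (M0 : metarule p) := (mhead M0, mbody M0, mex M0).
Definition mr_decode (c : lit 'I_p * seq (lit 'I_p) * seq nat) :=
  Metarule c.1.1 c.1.2 c.2.
Lemma mr_codeK : cancel mr_code mr_decode. Proof. by case. Qed.
HB.instance Definition _ := Equality.copy (metarule p) (can_type mr_codeK).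
End MREq.

Definition clause (p : nat) := (lit 'I_p * seq (lit 'I_p))%type.

Definition in_fragment (i j : nat) (p : nat) (M0 : metarule p) : Prop :=
  size (mbody M0) <= j /\ forall l, l \in mhead M0 :: mbody M0 -> arity l <= i.

Definition pred_positions (p : nat) (M0 : metarule p) : seq (term 'I_p) :=
  map fst (mhead M0 :: mbody M0).
Definition additional_ex_vars (p : nat) (M0 : metarule p) : seq nat :=
  [seq x <- undup (mex M0) | HV x \notin pred_positions M0].

Definition subst_term (p : nat) (ex : seq nat) (theta : nat -> 'I_p)
  (t : term 'I_p) : term 'I_p :=
  match t with HV x => if x \in ex then PS (theta x) else t | _ => t end.
Definition subst_lit (p : nat) (ex : seq nat) (theta : nat -> 'I_p)
  (l : lit 'I_p) : lit 'I_p :=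
  (subst_term ex theta l.1, map (subst_term ex theta) l.2).
Definition instantiate (p : nat) (M0 : metarule p) (theta : nat -> 'I_p) : clause p :=
  (subst_lit (mex M0) theta (mhead M0), map (subst_lit (mex M0) theta) (mbody M0)).

Definition is_clause_of (p : nat) (M : seq (metarule p)) (c : clause p) : Prop :=
  exists2 M0, M0 \in M & exists theta : nat -> 'I_p, c = instantiate M0 theta.

Definition is_program_of (p : nat) (M : seq (metarule p)) (n : nat)
  (P : seq (clause p)) : Prop :=
  size P = n /\ forall c, c \in P -> is_clause_of M c.

(* Main.v *)
Require Import Defs.
From HB Require Import structures.
From mathcomp Require Import all_boot.
Set Implicit Arguments. Unset Strict Implicit.

Fixpoint allseq {T : Type} (D : seq T) (n : nat) : seq (seq T) :=
  if n is n'.+1 then [seq c :: s | c <- D, s <- allseq D n'] else [:: [::]].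

Lemma size_allseq T (D : seq T) n : size (allseq D n) = size D ^ n.
Proof. elim: n => [|n IH] //=; by rewrite size_allpairs IH expnS. Qed.

Lemma mem_allseq (T : eqType) (D : seq T) n (s : seq T) :
  size s = n -> {subset s <= D} -> s \in allseq D n.
Proof.
elim: n s => [|n IH] [|c s] //= [Hs] Hsub.
apply: allpairs_f; first by apply: Hsub; rewrite inE eqxx.
by apply: IH => // x Hx; apply: Hsub; rewrite inE Hx orbT.
Qed.

Lemma subst_term_eq p (ex : seq nat) (th th' : nat -> 'I_p) :
  {in ex, th =1 th'} -> subst_term ex th =1 subst_term ex th'.
Proof. move=> H [x|x|q] //=; case: ifP => // Hx; by rewrite H. Qed.

Lemma instantiate_eq p (M0 : metarule p) (th th' : nat -> 'I_p) :
  {in mex M0, th =1 th'} -> instantiate M0 th = instantiate M0 th'.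
Proof.
move=> H; have E := @subst_term_eq p (mex M0) th th' H.
have El : subst_lit (mex M0) th =1 subst_lit (mex M0) th'.
  by move=> [a b]; rewrite /subst_lit /= E (eq_map E).
by rewrite /instantiate El (eq_map El).
Qed.

Definition thetaof p (d : 'I_p) (vs : seq nat) (t : seq 'I_p) : nat -> 'I_p :=
  fun x => nth d t (index x vs).

Definition clauses_of p (d : 'I_p) (M0 : metarule p) : seq (clause p) :=
  [seq instantiate M0 (thetaof d (undup (mex M0)) t)
     | t <- allseq (enum 'I_p) (size (undup (mex M0)))].

Lemma mem_clauses_of p (d : 'I_p) (M0 : metarule p) th :
  instantiate M0 th \in clauses_of d M0.
Proof.
set vs := undup (mex M0).
have -> : instantiate M0 th = instantiate M0 (thetaof d vs (map th vs)).
  apply: instantiate_eq => x Hx.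
  rewrite /thetaof (nth_map 0); last by rewrite index_mem mem_undup.
  by rewrite nth_index // mem_undup.
apply: map_f; apply: mem_allseq; first by rewrite size_map.
by move=> x _; rewrite mem_enum.
Qed.

Lemma size_undup_mex p (M0 : metarule p) j :
  size (mbody M0) <= j ->
  size (undup (mex M0)) <= j + 1 + size (additional_ex_vars M0).
Proof.
move=> Hj.
set vs := undup (mex M0).
rewrite -(count_predC (fun x => HV x \in pred_positions M0) vs).
rewrite /additional_ex_vars size_filter -/vs leq_add2r.
rewrite -size_filter.
have : size [seq x <- vs | HV x \in pred_positions M0] <= size (pred_positions M0).
  rewrite -(size_map (@HV 'I_p)).
  apply: uniq_leq_size.
    rewrite map_inj_uniq; first by apply: filter_uniq; apply: undup_uniq.
    by move=> a b [].
  by move=> y /mapP [x]; rewrite mem_filter => /andP [H _] ->.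
move/leq_trans; apply.
by rewrite /pred_positions size_map /= addn1 ltnS.
Qed.

Lemma sumn_bound (T : eqType) (f : T -> nat) (s : seq T) B :
  (forall x, x \in s -> f x <= B) -> sumn (map f s) <= size s * B.
Proof.
elim: s => [|a s IH] //= H.
rewrite mulSn leq_add //; first by apply: H; rewrite inE eqxx.
by apply: IH => x Hx; apply: H; rewrite inE Hx orbT.
Qed.

Theorem proposition2 (p m i j k n : nat) (M : seq (metarule p)) :
  size M = m ->
  (forall M0, M0 \in M ->
     in_fragment i j M0 /\ size (additional_ex_vars M0) <= k) ->
  forall progs : seq (seq (clause p)),
    uniq progs ->
    (forall P, P \in progs -> is_program_of M n P) ->
    size progs <= (m * p ^ (j + 1 + k)) ^ n.
Proof.
move=> Hm HM progs Hu Hprogs.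
case: p M Hm HM progs Hu Hprogs => [|p'] M Hm HM progs Hu Hprogs.
  case: n Hprogs => [|n] Hprogs.
    rewrite expn0; have : {subset progs <= [:: [::]]}.
      move=> P /Hprogs [HP _]; rewrite inE; by case: P HP.
    by move/(uniq_leq_size Hu).
  case: progs Hu Hprogs => [|P ps] // _ Hprogs.
  have [HP Hc] := Hprogs P (mem_head _ _).
  clear Hprogs; move: HP Hc; case: P => [|c P] // _ Hc.
  have [M0 _ [th _]] := Hc c (mem_head _ _).
  by case: (th 0).
set D := flatten [seq clauses_of ord0 M0 | M0 <- M].
have HD : size D <= m * p'.+1 ^ (j + 1 + k).
  rewrite /D size_flatten /shape -map_comp -Hm.
  apply: sumn_bound => M0 HM0 /=.
  rewrite /clauses_of size_map size_allseq size_enum_ord.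
  apply: leq_pexp2l => //.
  have [[Hj _] Hk] := HM M0 HM0.
  apply: leq_trans (size_undup_mex Hj) _.
  by rewrite leq_add2l.
apply: leq_trans (_ : size (allseq D n) <= _).
  apply: uniq_leq_size => // P /Hprogs [HP Hc].
  apply: mem_allseq => // c /Hc [M0 HM0 [th ->]].
  apply/flattenP; exists (clauses_of ord0 M0); first by apply: map_f.
  exact: mem_clauses_of.
rewrite size_allseq.
case: n {Hprogs} => [|n]; first by rewrite !expn0.
by rewrite leq_exp2r.
Qed.
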